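(* Let $T=(A,B,C)$ be a nondegenerate, counterclockwise triangle all of whose angles are less than $120^\circ$, so that its flank triangles $F_a,F_b,F_c$ are nondegenerate and counterclockwise. Then the second isodynamic points of $F_a$, $F_b$, $F_c$ all coincide with the second isodynamic point $X_{16}$ of $T$.
   Context: Identify the Euclidean plane with $\mathbb{C}$ and put $\rho=e^{2\pi i/3}$. Let $T=(A,B,C)$ be a nondegenerate triangle whose vertices are listed counterclockwise. On each side of $T$ erect outwardly a regular hexagon, i.e. the regular hexagon having that side as an edge and lying on the opposite side of that side's line from the third vertex. The flank triangles of $T$ are: $F_a$ with vertices $A,\ A+\rho(C-A),\ A+\rho^{-1}(B-A)$; $F_b$ with vertices $B,\ B+\rho(A-B),\ B+\rho^{-1}(C-B)$; $F_c$ with vertices $C,\ C+\rho(B-C),\ C+\rho^{-1}(A-C)$. For example, $A+\rho(C-A)$ and $A+\rho^{-1}(B-A)$ are the vertices adjacent to $A$, other than $C$ resp. $B$, of the hexagons erected on $AC$ resp. $AB$. The angle of $F_a$ at $A$ equals $120^\circ-\angle A$, and similarly for $F_b$ and $F_c$. For a nondegenerate triangle with vertices $V_1,V_2,V_3$, let $\ell_i$ be the length of the side opposite $V_i$ and $\theta_i$ the angle at $V_i$. The second isodynamic point $X_{16}$ is the point with homogeneous barycentric coordinates $(\ell_1\sin(\theta_1-\pi/3):\ell_2\sin(\theta_2-\pi/3):\ell_3\sin(\theta_3-\pi/3))$. *)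

(* Defs.v *)
From Stdlib Require Import Reals.
From Coquelicot Require Import Coquelicot.
Open Scope R_scope.

Definition rho : C := (cos (2 * PI / 3), sin (2 * PI / 3)).

Definition dotC (u v : C) : R := fst u * fst v + snd u * snd v.
Definition crossC (u v : C) : R := fst u * snd v - snd u * fst v.

Definition ccw (A B C0 : C) : Prop := crossC (Cminus B A) (Cminus C0 A) > 0.

Definition angle_at (V P Q : C) : R :=
  acos (dotC (Cminus P V) (Cminus Q V) / (Cmod (Cminus P V) * Cmod (Cminus Q V))).

Definition flank_a (A B C0 : C) : C * C * C :=
  (A, Cplus A (Cmult rho (Cminus C0 A)), Cplus A (Cmult (Cinv rho) (Cminus B A))).
Definition flank_b (A B C0 : C) : C * C * C :=
  (B, Cplus B (Cmult rho (Cminus A B)), Cplus B (Cmult (Cinv rho) (Cminus C0 B))).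
Definition flank_c (A B C0 : C) : C * C * C :=
  (C0, Cplus C0 (Cmult rho (Cminus B C0)), Cplus C0 (Cmult (Cinv rho) (Cminus A C0))).

(* Homogeneous Cartesian coordinates (sum w_i V_i , sum w_i) of the point with
   homogeneous barycentric coordinates (w1:w2:w3) w.r.t. (V1,V2,V3).
   The second component being 0 means a point at infinity. *)
Definition bary_hom (V1 V2 V3 : C) (w1 w2 w3 : R) : C * R :=
  (Cplus (Cplus (Cmult (RtoC w1) V1) (Cmult (RtoC w2) V2)) (Cmult (RtoC w3) V3),
   w1 + w2 + w3).

Definition same_point (p q : C * R) : Prop :=
  exists k : R, k <> 0 /\ fst p = Cmult (RtoC k) (fst q) /\ snd p = k * snd q.

Definition X16_hom (V1 V2 V3 : C) : C * R :=
  let l1 := Cmod (Cminus V3 V2) in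
  let l2 := Cmod (Cminus V1 V3) in
  let l3 := Cmod (Cminus V2 V1) in
  let t1 := angle_at V1 V2 V3 in
  let t2 := angle_at V2 V3 V1 in
  let t3 := angle_at V3 V1 V2 in
  bary_hom V1 V2 V3 (l1 * sin (t1 - PI / 3)) (l2 * sin (t2 - PI / 3))
                    (l3 * sin (t3 - PI / 3)).

Definition X16_tri (T : C * C * C) : C * R :=
  let '(V1, V2, V3) := T in X16_hom V1 V2 V3.

(* Main.v *)
Require Import Defs.
From Stdlib Require Import Reals Lra Psatz.
From Coquelicot Require Import Coquelicot.
Open Scope R_scope.

Lemma rho_eq : rho = (-1/2, sqrt 3 / 2).
Proof.
  unfold rho. replace (2*PI/3) with (PI - PI/3) by field.
  rewrite Rtrigo_facts.cos_pi_minus, Rtrigo_facts.sin_pi_minus, cos_PI3, sin_PI3.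
  f_equal; field.
Qed.

Lemma sqrt3_sq : sqrt 3 * sqrt 3 = 3.
Proof. apply sqrt_sqrt; lra. Qed.

Lemma rhoinv_eq : Cinv rho = (-1/2, - (sqrt 3 / 2)).
Proof.
  rewrite rho_eq. unfold Cinv; simpl.
  assert (H := sqrt3_sq).
  replace ((-1/2) * ((-1/2) * 1) + sqrt 3 / 2 * (sqrt 3 / 2 * 1)) with 1 by nra.
  f_equal; field.
Qed.

Definition nsq (u : C) : R := fst u * fst u + snd u * snd u.

Lemma Cmod_sq u : Cmod u * Cmod u = nsq u.
Proof. unfold Cmod, nsq. rewrite sqrt_sqrt; [ring| nra]. Qed.

Lemma Cmod_pos u : crossC u u = 0 -> True. Proof. auto. Qed.

Lemma Cmod_gt0 u : nsq u > 0 -> Cmod u > 0.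
Proof. intro H. unfold Cmod. apply sqrt_lt_R0. unfold nsq in H. nra. Qed.

Lemma cross_nsq_l u v : crossC u v <> 0 -> nsq u > 0.
Proof. destruct u as [a b], v as [c d]; unfold crossC, nsq; simpl. intro H.
  destruct (Req_dec a 0); destruct (Req_dec b 0); subst; try nra.
  all: exfalso; apply H; ring. Qed.
Lemma cross_nsq_r u v : crossC u v <> 0 -> nsq v > 0.
Proof. destruct u as [a b], v as [c d]; unfold crossC, nsq; simpl. intro H.
  destruct (Req_dec c 0); destruct (Req_dec d 0); subst; try nra.
  all: exfalso; apply H; ring. Qed.

Lemma lagrange u v : dotC u v * dotC u v + crossC u v * crossC u v = nsq u * nsq v.
Proof. destruct u, v; unfold dotC, crossC, nsq; simpl; ring. Qed.

Lemma acos_sin_cos u v : crossC u v > 0 ->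
  let x := dotC u v / (Cmod u * Cmod v) in
  sin (acos x) = crossC u v / (Cmod u * Cmod v) /\ cos (acos x) = x.
Proof.
  intros H x.
  assert (Hu := Cmod_gt0 u (cross_nsq_l u v ltac:(lra))).
  assert (Hv := Cmod_gt0 v (cross_nsq_r u v ltac:(lra))).
  assert (L := lagrange u v). rewrite <- (Cmod_sq u), <- (Cmod_sq v) in L.
  set (m := Cmod u) in *. set (n := Cmod v) in *.
  assert (Hmn : m * n > 0) by nra.
  assert (Hx2 : x * x + (crossC u v / (m*n)) * (crossC u v / (m*n)) = 1).
  { unfold x. replace (dotC u v / (m * n) * (dotC u v / (m * n)) + crossC u v / (m * n) * (crossC u v / (m * n)))
      with ((dotC u v * dotC u v + crossC u v * crossC u v) / ((m*n)*(m*n))) by (field; lra).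
    rewrite L. field. lra. }
  assert (Hc : crossC u v / (m*n) > 0) by (apply Rdiv_lt_0_compat; lra).
  assert (Hb : -1 <= x <= 1) by (split; nra).
  split; [| apply cos_acos; auto].
  rewrite sin_acos; auto.
  replace (1 - x²) with ((crossC u v / (m*n))²) by (unfold Rsqr; lra).
  apply sqrt_Rsqr; lra.
Qed.

Definition Dtri (V1 V2 V3 : C) : R := crossC (Cminus V2 V1) (Cminus V3 V1).
Definition nw (s : R) (V1 V2 V3 : C) : R :=
  nsq (Cminus V3 V2) * (Dtri V1 V2 V3 - s * dotC (Cminus V2 V1) (Cminus V3 V1)).
Definition Ltri (V1 V2 V3 : C) : R :=
  Cmod (Cminus V3 V2) * Cmod (Cminus V1 V3) * Cmod (Cminus V2 V1).

Lemma Cmod_sym a b : Cmod (Cminus a b) = Cmod (Cminus b a).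
Proof. destruct a, b; unfold Cmod; simpl; f_equal; ring. Qed.

Lemma Dtri_cyc V1 V2 V3 : Dtri V2 V3 V1 = Dtri V1 V2 V3.
Proof. destruct V1, V2, V3; unfold Dtri, crossC; simpl; ring. Qed.

Lemma Ltri_cyc V1 V2 V3 : Ltri V2 V3 V1 = Ltri V1 V2 V3.
Proof. unfold Ltri; ring. Qed.

Lemma Ltri_pos V1 V2 V3 : Dtri V1 V2 V3 > 0 -> Ltri V1 V2 V3 > 0.
Proof.
  intro H.
  assert (H1 : nsq (Cminus V2 V1) > 0) by (apply (cross_nsq_l _ (Cminus V3 V1)); unfold Dtri in H; lra).
  assert (H2 : nsq (Cminus V1 V3) > 0).
  { apply (cross_nsq_l _ (Cminus V2 V3)). rewrite <- Dtri_cyc, <- Dtri_cyc in H. unfold Dtri in H; lra. }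
  assert (H3 : nsq (Cminus V3 V2) > 0).
  { apply (cross_nsq_l _ (Cminus V1 V2)). rewrite <- Dtri_cyc in H. unfold Dtri in H; lra. }
  unfold Ltri. apply Cmod_gt0 in H1, H2, H3.
  apply Rmult_lt_0_compat; [apply Rmult_lt_0_compat|]; lra.
Qed.

Lemma weight V1 V2 V3 : Dtri V1 V2 V3 > 0 ->
  Cmod (Cminus V3 V2) * sin (angle_at V1 V2 V3 - PI/3) =
  nw (sqrt 3) V1 V2 V3 / (2 * Ltri V1 V2 V3).
Proof.
  intro H. assert (HL := Ltri_pos _ _ _ H).
  unfold angle_at. destruct (acos_sin_cos (Cminus V2 V1) (Cminus V3 V1) H) as [Hs Hc].
  rewrite sin_minus, Hs, Hc, cos_PI3, sin_PI3.
  unfold nw, Ltri. rewrite <- Cmod_sq. rewrite (Cmod_sym V1 V3). fold (Dtri V1 V2 V3).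
  unfold Ltri in HL. rewrite (Cmod_sym V1 V3) in HL.
  set (a := Cmod (Cminus V3 V2)) in *.
  set (m := Cmod (Cminus V2 V1)) in *. set (n := Cmod (Cminus V3 V1)) in *.
  assert (a <> 0). { intro E; rewrite E in HL; lra. }
  assert (m <> 0). { intro E; rewrite E in HL; lra. }
  assert (n <> 0). { intro E; rewrite E in HL; lra. }
  field. auto.
Qed.

Lemma X16_formula V1 V2 V3 : Dtri V1 V2 V3 > 0 ->
  X16_hom V1 V2 V3 = bary_hom V1 V2 V3
     (nw (sqrt 3) V1 V2 V3 / (2 * Ltri V1 V2 V3))
     (nw (sqrt 3) V2 V3 V1 / (2 * Ltri V1 V2 V3))
     (nw (sqrt 3) V3 V1 V2 / (2 * Ltri V1 V2 V3)).
Proof.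
  intro H. unfold X16_hom. cbv zeta.
  rewrite (weight V1 V2 V3 H).
  rewrite (weight V2 V3 V1) by (rewrite Dtri_cyc; auto).
  rewrite (weight V3 V1 V2) by (rewrite <- Dtri_cyc; auto).
  rewrite (Ltri_cyc V1 V2 V3), <- (Ltri_cyc V3 V1 V2). reflexivity.
Qed.

Ltac tpow t H :=
  assert (H2: t^2 = 3/4) by (rewrite <- H; field);
  assert (H3: t^3 = 3/4*t) by (rewrite <- H; field);
  assert (H4: t^4 = 9/16) by (replace (9/16) with (3/4*(3/4)) by field; rewrite <- H2; ring);
  assert (H5: t^5 = 9/16*t) by (rewrite <- H4; ring);
  assert (H6: t^6 = 27/64) by (replace (27/64) with (3/4*(9/16)) by field; rewrite <- H4, <- H2; ring);
  assert (H7: t^7 = 27/64*t) by (rewrite <- H6; ring);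
  assert (H8: t^8 = 81/256) by (replace (81/256) with (9/16*(9/16)) by field; rewrite <- H4; ring);
  ring_simplify; rewrite ?H2, ?H3, ?H4, ?H5, ?H6, ?H7, ?H8; field.

Definition O : C := (0,0).

Lemma idW0 t u v : 4 * (t * t) = 3 ->
  let G2 := Cmult (-1/2, t) v in let G3 := Cmult (-1/2, -t) u in
  Dtri O u v * (nw (2*t) O G2 G3 + nw (2*t) G2 G3 O + nw (2*t) G3 O G2)
  = Dtri O G2 G3 * (nw (2*t) O u v + nw (2*t) u v O + nw (2*t) v O u).
Proof. intros Ht G2 G3; unfold G2, G3, O. destruct u as [b1 b2], v as [c1 c2].
  unfold nw, Dtri, nsq, crossC, dotC; simpl. tpow t Ht. Qed.

Lemma idX0 t u v : 4 * (t * t) = 3 ->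
  let G2 := Cmult (-1/2, t) v in let G3 := Cmult (-1/2, -t) u in
  Dtri O u v * (nw (2*t) G2 G3 O * fst G2 + nw (2*t) G3 O G2 * fst G3)
  = Dtri O G2 G3 * (nw (2*t) u v O * fst u + nw (2*t) v O u * fst v).
Proof. intros Ht G2 G3; unfold G2, G3, O. destruct u as [b1 b2], v as [c1 c2].
  unfold nw, Dtri, nsq, crossC, dotC; simpl. tpow t Ht. Qed.

Lemma idY0 t u v : 4 * (t * t) = 3 ->
  let G2 := Cmult (-1/2, t) v in let G3 := Cmult (-1/2, -t) u in
  Dtri O u v * (nw (2*t) G2 G3 O * snd G2 + nw (2*t) G3 O G2 * snd G3)
  = Dtri O G2 G3 * (nw (2*t) u v O * snd u + nw (2*t) v O u * snd v).
Proof. intros Ht G2 G3; unfold G2, G3, O. destruct u as [b1 b2], v as [c1 c2].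
  unfold nw, Dtri, nsq, crossC, dotC; simpl. tpow t Ht. Qed.

Lemma tr1 s A X Y : nw s A (Cplus A X) (Cplus A Y) = nw s O X Y.
Proof. destruct A, X, Y; unfold nw, Dtri, nsq, crossC, dotC, O; simpl; ring. Qed.
Lemma tr2 s A X Y : nw s (Cplus A X) (Cplus A Y) A = nw s X Y O.
Proof. destruct A, X, Y; unfold nw, Dtri, nsq, crossC, dotC, O; simpl; ring. Qed.
Lemma tr3 s A X Y : nw s (Cplus A X) A (Cplus A Y) = nw s X O Y.
Proof. destruct A, X, Y; unfold nw, Dtri, nsq, crossC, dotC, O; simpl; ring. Qed.
Lemma trD A X Y : Dtri A (Cplus A X) (Cplus A Y) = Dtri O X Y.
Proof. destruct A, X, Y; unfold Dtri, crossC, O; simpl; ring. Qed.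

Lemma comb DT DF w1 w2 w3 z1 z2 z3 a g2 g3 u1 v1 :
  DT*(w1+w2+w3) = DF*(z1+z2+z3) -> DT*(w2*g2+w3*g3) = DF*(z2*u1+z3*v1) ->
  DT*(w1*a+w2*(a+g2)+w3*(a+g3)) = DF*(z1*a+z2*(a+u1)+z3*(a+v1)).
Proof. intros H1 H2. transitivity (a*(DT*(w1+w2+w3)) + DT*(w2*g2+w3*g3)); [ring|].
  rewrite H1, H2; ring. Qed.

Lemma scale V1 V2 V3 W1 W2 W3 n1 n2 n3 m1 m2 m3 LT LF DT DF :
  LT > 0 -> LF > 0 -> DT > 0 -> DF > 0 ->
  DT*(m1+m2+m3) = DF*(n1+n2+n3) ->
  DT*(m1*fst W1+m2*fst W2+m3*fst W3) = DF*(n1*fst V1+n2*fst V2+n3*fst V3) ->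
  DT*(m1*snd W1+m2*snd W2+m3*snd W3) = DF*(n1*snd V1+n2*snd V2+n3*snd V3) ->
  same_point (bary_hom W1 W2 W3 (m1/(2*LF)) (m2/(2*LF)) (m3/(2*LF)))
             (bary_hom V1 V2 V3 (n1/(2*LT)) (n2/(2*LT)) (n3/(2*LT))).
Proof.
  intros HLT HLF HDT HDF E1 E2 E3.
  exists (DF*LT/(DT*LF)). split.
  { apply Rgt_not_eq. apply Rdiv_lt_0_compat; nra. }
  destruct V1 as [x1 y1], V2 as [x2 y2], V3 as [x3 y3], W1 as [p1 q1], W2 as [p2 q2], W3 as [p3 q3].
  simpl in *. unfold bary_hom, Cplus, Cmult, RtoC; simpl. split.
  - f_equal.
    + transitivity ((m1*p1+m2*p2+m3*p3)/(2*LF)); [field; lra|].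
      replace (m1*p1+m2*p2+m3*p3) with (DF*(n1*x1+n2*x2+n3*x3)/DT) by (rewrite <- E2; field; lra).
      field; lra.
    + transitivity ((m1*q1+m2*q2+m3*q3)/(2*LF)); [field; lra|].
      replace (m1*q1+m2*q2+m3*q3) with (DF*(n1*y1+n2*y2+n3*y3)/DT) by (rewrite <- E3; field; lra).
      field; lra.
  - transitivity ((m1+m2+m3)/(2*LF)); [field; lra|].
    replace (m1+m2+m3) with (DF*(n1+n2+n3)/DT) by (rewrite <- E1; field; lra).
    field; lra.
Qed.

Lemma fst_Cplus (a b : C) : fst (Cplus a b) = fst a + fst b. Proof. reflexivity. Qed.
Lemma snd_Cplus (a b : C) : snd (Cplus a b) = snd a + snd b. Proof. reflexivity. Qed.
Lemma fst_O : fst O = 0. Proof. reflexivity. Qed.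
Lemma snd_O : snd O = 0. Proof. reflexivity. Qed.

Lemma Cminus_Cplus (A v : C) : Cminus (Cplus A v) A = v.
Proof. destruct A, v; unfold Cminus, Cplus, Copp; simpl; f_equal; ring. Qed.
Lemma Cplus_Cminus (A B : C) : Cplus A (Cminus B A) = B.
Proof. destruct A, B; unfold Cminus, Cplus, Copp; simpl; f_equal; ring. Qed.

Lemma DF_formula t A u v : 4 * (t * t) = 3 ->
  Dtri A (Cplus A (Cmult (-1/2, t) v)) (Cplus A (Cmult (-1/2, -t) u)) * 2
  = Dtri A (Cplus A u) (Cplus A v) + 2*t * dotC u v.
Proof. intro Ht. destruct A, u, v; unfold Dtri, crossC, dotC, Cminus, Cplus, Cmult, Copp; simpl.
  assert (H2: t^2 = 3/4) by (rewrite <- Ht; field).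
  ring_simplify. rewrite ?H2. field. Qed.

Lemma acos_gt (x : R) : -1 <= x <= 1 -> acos x < 2*PI/3 -> x > -1/2.
Proof.
  intros Hb Ha. assert (Hp := PI_RGT_0). destruct (acos_bound x) as [H0 H1].
  assert (Hc : cos (2*PI/3) < cos (acos x)).
  { apply cos_decreasing_1; lra. }
  rewrite cos_acos in Hc by auto.
  replace (2*PI/3) with (PI - PI/3) in Hc by field.
  rewrite Rtrigo_facts.cos_pi_minus, cos_PI3 in Hc. lra.
Qed.

Lemma dot_bound A u v : Dtri A (Cplus A u) (Cplus A v) > 0 ->
  angle_at A (Cplus A u) (Cplus A v) < 2*PI/3 ->
  Dtri A (Cplus A u) (Cplus A v) + sqrt 3 * dotC u v > 0.
Proof.
  intros HD Ha. unfold angle_at in Ha. rewrite !Cminus_Cplus in Ha.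
  unfold Dtri in HD |- *. rewrite !Cminus_Cplus in HD |- *.
  assert (Hu := Cmod_gt0 u (cross_nsq_l u v ltac:(lra))).
  assert (Hv := Cmod_gt0 v (cross_nsq_r u v ltac:(lra))).
  destruct (acos_sin_cos u v HD) as [Hs Hc].
  assert (L := lagrange u v). rewrite <- (Cmod_sq u), <- (Cmod_sq v) in L.
  set (m := Cmod u) in *. set (n := Cmod v) in *.
  set (x := dotC u v / (m * n)) in *.
  assert (Hmn : m * n > 0) by nra.
  assert (Hb : -1 <= x <= 1).
  { split; apply Rmult_le_reg_r with (m*n); auto; unfold x;
    field_simplify; try lra; nra. }
  assert (Hx := acos_gt x Hb Ha).
  assert (Hd : dotC u v > - (m*n)/2).
  { unfold x in Hx. apply Rmult_lt_compat_r with (r := m*n) in Hx; auto.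
    field_simplify in Hx; lra. }
  assert (H3 := sqrt3_sq). assert (Hs3 : sqrt 3 > 0) by (apply sqrt_lt_R0; lra).
  set (d := dotC u v) in *. set (D := crossC u v) in *.
  destruct (Rle_dec 0 d). { nra. }
  assert (D * D > (sqrt 3 * d) * (sqrt 3 * d)) by nra.
  nra.
Qed.

Lemma flank_gen A u v : Dtri A (Cplus A u) (Cplus A v) > 0 ->
  angle_at A (Cplus A u) (Cplus A v) < 2*PI/3 ->
  same_point (X16_tri (flank_a A (Cplus A u) (Cplus A v))) (X16_hom A (Cplus A u) (Cplus A v)).
Proof.
  intros HD Ha. assert (Hb := dot_bound A u v HD Ha).
  unfold flank_a, X16_tri. rewrite !Cminus_Cplus, rhoinv_eq, rho_eq.
  assert (H3 := sqrt3_sq).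
  set (t := sqrt 3 / 2).
  assert (Ht : 4*(t*t)=3) by (unfold t; nra).
  assert (Hs : sqrt 3 = 2*t) by (unfold t; field).
  set (G2 := Cmult (-1/2, t) v). set (G3 := Cmult (-1/2, -t) u).
  assert (HDF : Dtri A (Cplus A G2) (Cplus A G3) > 0).
  { assert (E := DF_formula t A u v Ht). fold G2 G3 in E. rewrite <- Hs in E. lra. }
  rewrite (X16_formula A (Cplus A G2) (Cplus A G3) HDF), (X16_formula A _ _ HD).
  rewrite Hs.
  apply (scale _ _ _ _ _ _ _ _ _ _ _ _ _ _ (Dtri A (Cplus A u) (Cplus A v)) (Dtri A (Cplus A G2) (Cplus A G3))).
  - apply Ltri_pos; auto.
  - apply Ltri_pos; auto.
  - auto.
  - auto.
  - rewrite !tr1, !tr2, !tr3, !trD. exact (idW0 t u v Ht).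
  - rewrite !tr1, !tr2, !tr3, !trD, !fst_Cplus. apply comb.
    + exact (idW0 t u v Ht).
    + exact (idX0 t u v Ht).
  - rewrite !tr1, !tr2, !tr3, !trD, !snd_Cplus. apply comb.
    + exact (idW0 t u v Ht).
    + exact (idY0 t u v Ht).
Qed.

Lemma flank_real A B C0 : Dtri A B C0 > 0 -> angle_at A B C0 < 2*PI/3 ->
  same_point (X16_tri (flank_a A B C0)) (X16_hom A B C0).
Proof.
  intros HD Ha. pose proof (flank_gen A (Cminus B A) (Cminus C0 A)) as H.
  rewrite !Cplus_Cminus in H. auto.
Qed.

Lemma same_point_trans p q r : same_point p q -> same_point q r -> same_point p r.
Proof.
  intros [k1 [Hk1 [E1 F1]]] [k2 [Hk2 [E2 F2]]]. exists (k1*k2). split.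
  { intro E. apply Rmult_integral in E. tauto. }
  rewrite E1, F1, E2, F2. split; [|ring].
  destruct (fst r); unfold Cmult, RtoC; simpl; f_equal; ring.
Qed.

Lemma X16_cyc A B C0 : same_point (X16_hom B C0 A) (X16_hom A B C0).
Proof.
  exists 1. split; [lra|]. unfold X16_hom, bary_hom. cbv zeta.
  destruct A, B, C0. unfold Cplus, Cmult, RtoC; simpl. split; [f_equal|]; ring.
Qed.

Lemma flank_b_eq A B C0 : flank_b A B C0 = flank_a B C0 A.
Proof. reflexivity. Qed.
Lemma flank_c_eq A B C0 : flank_c A B C0 = flank_a C0 A B.
Proof. reflexivity. Qed.

Theorem mainTheorem2 (A B C0 : C) :
  ccw A B C0 ->
  angle_at A B C0 < 2 * PI / 3 ->
  angle_at B C0 A < 2 * PI / 3 ->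
  angle_at C0 A B < 2 * PI / 3 ->
  same_point (X16_tri (flank_a A B C0)) (X16_hom A B C0) /\
  same_point (X16_tri (flank_b A B C0)) (X16_hom A B C0) /\
  same_point (X16_tri (flank_c A B C0)) (X16_hom A B C0).
Proof.
  intros Hc Ha Hb Hcc.
  assert (HD : Dtri A B C0 > 0) by exact Hc.
  split; [|split].
  - apply flank_real; auto.
  - rewrite flank_b_eq. eapply same_point_trans; [apply flank_real|apply X16_cyc]; auto.
    rewrite Dtri_cyc; auto.
  - rewrite flank_c_eq. eapply same_point_trans; [apply flank_real|].
    + rewrite <- Dtri_cyc; auto.
    + auto.
    + eapply same_point_trans; apply X16_cyc.
Qed.
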